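(* Let $t\ge 2$ be an even integer and let $p\ge 3$ be a prime with $(t-1)\mid(p-1)$; write $p-1=a(t-1)$ (so $a$ is even). Let $g$ be a primitive root of $\mathbb{F}_p$ (a generator of $\mathbb{F}_p^*$), and set $B=\{g,g^2,\dots,g^{a/2}\}\subseteq\mathbb{F}_p^*$ and $W=\{a,2a,\dots,(t-1)a\}\subseteq\mathbb{Z}$. For $f\in\mathbb{F}_p^*$ define $$P_f=\{(w,b)\in W\times B : g^w b=f\},\qquad N_f=\{(w,b)\in W\times B : g^w b=-f\}.$$ Then for every $f\in\mathbb{F}_p^*$ we have $\{|P_f|,|N_f|\}=\{0,1\}$; in particular each of $P_f$ and $N_f$ has at most one element.
   Context: $\mathbb{F}_p$ is the field with $p$ elements and $\mathbb{F}_p^*$ its multiplicative group. *)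

(* Defs.v *)
From mathcomp Require Import all_boot all_order all_algebra.
Set Implicit Arguments. Unset Strict Implicit. Unset Printing Implicit Defensive.
Import GRing.Theory.
Local Open Scope ring_scope.

Definition Wset (a t : nat) : seq nat := [seq (a * i)%N | i <- iota 1 t.-1].

Definition Bset (p : nat) (g : 'F_p) (a : nat) : seq 'F_p :=
  undup [seq g ^+ j | j <- iota 1 a./2].

(* P_f (resp. N_f when called with -f): pairs (w,b) in W x B with g^w b = f *)
Definition Pset (p : nat) (g : 'F_p) (a t : nat) (f : 'F_p) : seq (nat * 'F_p) :=
  undup [seq wb <- [seq (w, b) | w <- Wset a t, b <- Bset g a] | g ^+ wb.1 * wb.2 == f].

(* Main.v *)
Require Import Defs.
From mathcomp Require Import all_boot all_order all_algebra.
From mathcomp Require Import finfield.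
From mathcomp Require Import zify.
Import GRing.Theory.

Definition inS (a h x : nat) : bool := (0 < x %% a <= h)%N.

Lemma modmodS (a T x : nat) : (x %% (a * T)) %% a = x %% a.
Proof. by apply: modn_dvdm; apply: dvdn_mulr. Qed.

Lemma rep_mod (a T i j x : nat) : (j < a)%N ->
  (a * i + j = x %[mod a * T])%N -> x %% a = j.
Proof.
move=> ja E.
by rewrite -(modmodS a T x) -E modmodS mulnC modnMDl modn_small.
Qed.

Lemma modT (T i : nat) : (1 <= i <= T)%N -> i %% T = if i == T then 0 else i.
Proof.
move=> /andP [h1 h2]; case: eqP => [->|ne]; first by rewrite modnn.
by rewrite modn_small //; rewrite ltn_neqAle h2 andbT; apply/eqP.
Qed.

Lemma rep_unique (a T i j i' j' : nat) : (j < a)%N -> (j' < a)%N ->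
  (1 <= i <= T)%N -> (1 <= i' <= T)%N ->
  (a * i + j = a * i' + j' %[mod a * T])%N -> i = i' /\ j = j'.
Proof.
move=> ja ja' hi hi' E.
have ejj : j = j' by rewrite -(@rep_mod a T i j _ ja E) mulnC modnMDl modn_small.
subst j'; split => //.
move/eqP: E; rewrite eqn_modDr => /eqP E.
have a0 : (0 < a)%N by lia.
have : a * (i %% T) = a * (i' %% T) by rewrite !muln_modr E.
move/eqP; rewrite eqn_pmul2l // !modT //.
clear E; move: hi hi'; case: (i =P T) => e1; case: (i' =P T) => e2 /= ? ? /eqP; lia.
Qed.

Lemma rep_exists (a T h x : nat) : (h < a)%N -> (0 < T)%N -> inS a h x ->
  exists i j, [/\ (1 <= i <= T)%N, (1 <= j <= h)%N & (a * i + j = x %[mod a * T])%N].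
Proof.
move=> ha T0 /andP [r0 rh].
have a0 : (0 < a)%N by lia.
set x' := x %% (a * T).
have ex : x' = (x' %/ a * a + x %% a)%N by rewrite {1}(divn_eq x' a) modmodS.
have qT : (x' %/ a < T)%N by rewrite ltn_divLR // mulnC ltn_mod muln_gt0 a0.
exists (if x' %/ a == 0%N then T else x' %/ a), (x %% a).
split => //.
- case: eqP => q0; first by rewrite T0 leqnn.
  by rewrite lt0n (ltnW qT) andbT; apply/eqP.
- by rewrite r0.
- case: eqP => q0.
  + rewrite modnDl [in RHS]ex q0 mul0n add0n modn_small //.
    apply: (@leq_trans a); first by rewrite ltn_mod.
    by rewrite leq_pmulr.
  + by rewrite mulnC -ex /x' modn_mod.
Qed.

Lemma shift (a h m x : nat) : a = (h + h)%N -> (0 < h)%N ->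
  inS a h (x + (a * m + h)) = ~~ inS a h x.
Proof.
move=> ea h0; rewrite /inS.
have -> : (x + (a * m + h)) %% a = (x %% a + h) %% a.
  by rewrite modnDml addnCA mulnC modnMDl.
have : (x %% a < a)%N by rewrite ltn_mod ea; lia.
set r := x %% a => ra.
case: (ltnP r h) => rh.
- rewrite modn_small; last lia. lia.
- have -> : (r + h = a + (r - h))%N by lia.
  rewrite modnDl modn_small; lia.
Qed.

Local Open Scope ring_scope.

Lemma memPset (p : nat) (g : 'F_p) (a t : nat) (f : 'F_p) w b :
  ((w, b) \in Pset g a t f) =
  [&& w \in Wset a t, b \in Bset g a & g ^+ w * b == f].
Proof.
rewrite /Pset mem_undup mem_filter /= andbC.
case: (g ^+ w * b == f); rewrite ?andbF //= andbT.
apply/allpairsP/andP; rewrite andbT.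
- by move=> [[w1 b1] [/= h1 h2 [-> ->]]].
- by move=> [h1 h2]; exists (w, b).

Qed.

Lemma memW a t w : (w \in Wset a t) = [exists i : 'I_t, (1 <= i)%N && (w == a * i)%N].
Proof.
apply/mapP/existsP => [[i] | [i /andP [i1 /eqP ->]]].
- rewrite mem_iota => /andP [i1 it] ->.
  have it' : (i < t)%N by move: it; case: t => //= t' ; lia.
  by exists (Ordinal it'); rewrite /= i1 eqxx.
- exists (nat_of_ord i) => //; rewrite mem_iota i1 /=.
  have := ltn_ord i; lia.
Qed.

Lemma memB p (g : 'F_p) a b : (b \in Bset g a) = [exists j : 'I_a./2.+1, (1 <= j)%N && (b == g ^+ j)].
Proof.
rewrite mem_undup; apply/mapP/existsP => [[j] | [j /andP [j1 /eqP ->]]].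
- rewrite mem_iota => /andP [j1 jt] ->.
  have jt' : (j < a./2.+1)%N by lia.
  by exists (Ordinal jt'); rewrite /= j1 eqxx.
- exists (nat_of_ord j) => //; rewrite mem_iota j1 /=.
  have := ltn_ord j; lia.
Qed.

Lemma elemP (p : nat) (g : 'F_p) (a t h x : nat) z :
  a = (h + h)%N -> p.-1 = (a * t.-1)%N -> p.-1.-primitive_root g ->
  z \in Pset g a t (g ^+ x) ->
  exists i j, [/\ (1 <= i <= t.-1)%N, (1 <= j <= h)%N, z = ((a * i)%N, g ^+ j)
     & (a * i + j = x %[mod a * t.-1])%N].
Proof.
move=> ea en pg; case: z => w b.
rewrite memPset memW memB => /and3P [/existsP [i /andP [i1 /eqP ->]]
   /existsP [j /andP [j1 /eqP ->]] E].
exists (nat_of_ord i), (nat_of_ord j); split.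
- have := ltn_ord i; lia.
- have ha : a./2 = h by rewrite ea addnn doubleK.
  move: j1 (ltn_ord j); move: (nat_of_ord j) => jj; rewrite ha; lia.
- by [].
- by rewrite -exprD (eq_prim_root_expr pg) en in E; apply/eqP.
Qed.

Lemma sizeP (p : nat) (g : 'F_p) (a t h x : nat) :
  a = (h + h)%N -> (0 < h)%N -> (0 < t.-1)%N ->
  p.-1 = (a * t.-1)%N -> p.-1.-primitive_root g ->
  size (Pset g a t (g ^+ x)) = if inS a h x then 1%N else 0%N.
Proof.
move=> ea h0 T0 en pg.
have ha : (h < a)%N by lia.
have ha2 : a./2 = h by rewrite ea addnn doubleK.
set s := Pset g a t (g ^+ x).
case: ifP => Hin.
- have [i [j [hi hj E]]] := @rep_exists a t.-1 h x ha T0 Hin.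
  have z0s : ((a * i)%N, g ^+ j) \in s.
    rewrite memPset memW memB; apply/and3P; split.
    + have it : (i < t)%N by move: hi T0; case: (t) => //= t'; lia.
      by apply/existsP; exists (Ordinal it); rewrite /= eqxx andbT; case/andP: hi.
    + have jt : (j < a./2.+1)%N by rewrite ha2; lia.
      by apply/existsP; exists (Ordinal jt); rewrite /= eqxx andbT; case/andP: hj.
    + by rewrite -exprD (eq_prim_root_expr pg) en; apply/eqP.
  have sub : {subset s <= [:: ((a * i)%N, g ^+ j)]}.
    move=> z zs; rewrite inE; apply/eqP.
    have [i' [j' [hi' hj' -> E']]] := @elemP p g a t h x z ea en pg zs.
    have [-> ->] : i' = i /\ j' = j.
      apply: (@rep_unique a t.-1) => //; try lia.
    by [].
  have us : uniq s by rewrite /s /Pset undup_uniq.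
  have le1 : (size s <= 1)%N := uniq_leq_size us sub.
  have : (0 < size s)%N by move: z0s; case: (s).
  lia.
- case E: s => [|z s'] //.
  have : z \in s by rewrite E inE eqxx.
  move/(@elemP p g a t h x z ea en pg) => [i [j [hi hj _ E']]].
  have ja : (j < a)%N by lia.
  have := @rep_mod a t.-1 i j x ja E'.
  move/negbT: Hin; rewrite /inS => Hin E2; move: Hin; rewrite E2; lia.
Qed.

Theorem lemma1 (t p a : nat) (g : 'F_p) :
  (2 <= t)%N -> ~~ odd t -> prime p -> (3 <= p)%N ->
  p.-1 = (a * t.-1)%N ->
  p.-1.-primitive_root g ->
  forall f : 'F_p, f != 0 ->
    let P := Pset g a t f in
    let N := Pset g a t (- f) in
    ((size P = 0%N /\ size N = 1%N) \/ (size P = 1%N /\ size N = 0%N)) /\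
    (size P <= 1)%N /\ (size N <= 1)%N.
Proof.
move=> t2 te pp p3 en pg f f0 P N.
have Todd : odd t.-1 by move: t2 te; case: (t) => //= t' _; case: (odd t').
have podd : odd p by case: (even_prime pp) => // p2; rewrite p2 in p3.
have aev : ~~ odd a.
  have : ~~ odd p.-1 by move: podd p3; case: (p) => //= p' -> _.
  by rewrite en oddM Todd andbT.
set h := a./2; set m := (t.-1)./2.
have ea : a = (h + h)%N by rewrite addnn -{1}(odd_double_half a) (negbTE aev).
have eT : t.-1 = (m + m).+1 by rewrite addnn -{1}(odd_double_half t.-1) Todd.
have h0 : (0 < h)%N.
  have : (0 < p.-1)%N by lia.
  rewrite en ea; case: (h) => //=; rewrite mul0n.
have T0 : (0 < t.-1)%N by rewrite eT.
set e := (a * m + h)%N.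
have e2 : (e * 2 = p.-1)%N by rewrite en eT /e ea; nia.
have ge : g ^+ e = -1.
  have : (g ^+ e) ^+ 2 == 1 by rewrite -exprM e2 (prim_expr_order pg).
  rewrite sqrf_eq1 => /orP [|/eqP //].
  rewrite -(expr0 g) (eq_prim_root_expr pg) mod0n modn_small; last lia.
  move=> /eqP e0; lia.
have fn : f ^+ p.-1 = 1.
  have := expf_card f; rewrite card_Fp // => E.
  have : f * f ^+ p.-1 = f * 1 by rewrite mulr1 -exprS prednK ?prime_gt0.
  by move/(mulfI f0).
have [k0 fk] := prim_rootP pg fn; move: (nat_of_ord k0) fk => k fk.
have sP : size P = if inS a h k then 1%N else 0%N.
  by rewrite /P fk; apply: sizeP.
have sN : size N = if inS a h (k + e) then 1%N else 0%N.
  by rewrite /N fk -mulrN1 -ge -exprD; apply: sizeP.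
rewrite sN sP /e shift //.
by case: (inS a h k) => /=; auto.
Qed.
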